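(* For $\sigma^2>0$ let $\Phi(\cdot;\sigma^2)$ denote the cumulative distribution function of $\mathcal{N}(0,\sigma^2)$. Fix $\alpha\ge0$ and $\beta^2\in(0,1)$. Let $\lambda_1\ge\lambda_2\ge0$ and $\sigma_1^2,\sigma_2^2\ge1$ satisfy $\lambda_1-\lambda_2\le\alpha$ and $\frac{\sigma_1^2}{\sigma_2^2},\frac{\sigma_2^2}{\sigma_1^2}\in[1-\beta^2,1+\beta^2]$. Let \[ X=\sqrt{\frac{8}{\pi}}\,\frac{\alpha+\beta^2\lambda_1}{\min\{\sigma_1,\sigma_2\}}\exp\Big(-\frac{\lambda_2^2(1-\beta^2)}{2\max\{\sigma_1^2,\sigma_2^2\}}\Big). \] Then both $\frac{\Phi(\lambda_1;\sigma_1^2)}{\Phi(\lambda_2;\sigma_2^2)}$ and $\frac{\Phi(\lambda_2;\sigma_2^2)}{\Phi(\lambda_1;\sigma_1^2)}$ lie in $[1-\beta^2-X,\ 1+\beta^2+X]$. *)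

(* Defs.v *)
From HB Require Import structures.
From mathcomp Require Import all_boot all_order all_algebra.
From mathcomp Require Import all_classical all_reals all_analysis.
Set Implicit Arguments. Unset Strict Implicit. Unset Printing Implicit Defensive.
Import Order.TTheory GRing.Theory Num.Theory.
Local Open Scope ring_scope.
Local Open Scope classical_set_scope.

(* Phi s x : CDF at x of the centered normal distribution N(0, s^2)
   (s = standard deviation), i.e. normal_prob 0 s of ]-oo, x]. *)
Definition Phi {R : realType} (s x : R) : R :=
  fine (normal_prob 0 s `]-oo, x]).

(* Main.v *)
Require Import Defs.
From HB Require Import structures.
From mathcomp Require Import all_boot all_order all_algebra.
From mathcomp Require Import all_classical all_reals all_analysis.
From mathcomp Require Import ring lra measurable_realfun.
Import Order.TTheory GRing.Theory Num.Theory.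
Local Open Scope ring_scope.
Section S.
Context {R : realType}.
Local Open Scope classical_set_scope.

Lemma pdf_scale (s t : R) : 0 < s ->
  normal_pdf 0 s (t * s) * s = normal_pdf 0 1 t.
Proof.
move=> s0; rewrite /normal_pdf gt_eqF// oner_eq0 /normal_peak /normal_fun.
have -> : - (t * s - 0) ^+ 2 / (s ^+ 2 *+ 2) = - (t - 0) ^+ 2 / (1 ^+ 2 *+ 2).
  by field; rewrite gt_eqF// exprn_gt0.
rewrite mulrAC; congr (_ * _).
rewrite -!mulrnAr sqrtrM ?sqr_ge0// sqrtr_sqr gtr0_norm// expr1n mul1r.
by rewrite invfM mulrAC mulVf ?gt_eqF// mul1r.
Qed.

Lemma dscale (s : R) : (fun t : R => t * s)^`()%classic = cst s.
Proof.
apply/funext => t; rewrite derive1E deriveM// derive_cst derive_id.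
by rewrite scaler0 add0r /= [_ *: _]mulr1.
Qed.

Lemma Phi_scale (s x : R) : 0 < s -> Phi s x = Phi 1 (x / s).
Proof.
move=> s0; rewrite /Phi /normal_prob.
set F := fun t : R => t * s.
have -> : `]-oo, x] = `]-oo, F (x / s)] :> set R by rewrite /F divfK ?gt_eqF.
rewrite (@increasing_ge0_integration_by_substitutionNy _ F (normal_pdf 0 s)).
- congr fine; apply: eq_integral => t _ /=.
  by congr EFin; rewrite dscale; exact: (@pdf_scale s t s0).
- by move=> a b _ _ ab; rewrite /F ltr_pM2r.
- by rewrite dscale => ? _; exact: cvg_cst.
- by rewrite dscale; exact: is_cvg_cst.
- by rewrite dscale; exact: cvg_cst.
- split; first by move=> ? _; exact: derivableM.
  by apply: cvg_at_left_filter; exact: mulrr_continuous.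
- by apply: gt0_cvgMlNy => //; exact: cvg_id.
- move: (@continuous_normal_pdf R 0 s (lt0r_neq0 s0)) => c.
  apply/continuous_within_itvNycP; split => [y _|]; first exact: (c y).
  apply: cvg_at_left_filter. exact: c.
- by move=> y _; exact: normal_pdf_ge0.
Qed.

Let P := @normal_prob R 0 1.

Lemma PfinA (A : set R) : measurable A -> P A \is a fin_num.
Proof. by move=> mA; exact: (fin_num_measure P _ mA). Qed.

Lemma pdf1_dec (a x : R) : 0 <= a -> a <= x -> normal_pdf 0 1 x <= normal_pdf 0 1 a.
Proof.
move=> a0 ax; rewrite /normal_pdf oner_eq0 ler_wpM2l ?normal_peak_ge0//.
rewrite /normal_fun ler_expR !subr0 ler_pM2r ?invr_gt0 ?expr1n//.
by rewrite lerN2 ler_sqr// ?nnegrE// (le_trans a0 ax).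
Qed.

Lemma Phi1_diff (a b : R) : 0 <= a -> a <= b ->
  Phi 1 b - Phi 1 a <= (b - a) * normal_pdf 0 1 a.
Proof.
move=> a0 ab; rewrite /Phi.
have -> : `]-oo, b] = `]-oo, a] `|` `]a, b] :> set R.
  by apply: itv_bndbnd_setU; rewrite bnd_simp.
rewrite (measureU P) //; last first.
  apply/seteqP; split => // y /=; rewrite !in_itv/= => -[ya /andP[ay _]].
  by move: (lt_le_trans ay ya); rewrite ltxx.
rewrite fineD ?PfinA// (_ : fine (normal_prob 0 1 `]-oo, a]) = fine (P `]-oo, a]))// addrAC subrr add0r.
have h : (P `]a, b] <= ((b - a) * normal_pdf 0 1 a)%:E)%E.
  rewrite /P /normal_prob.
  apply: (@le_trans _ _ (\int[lebesgue_measure]_(x in `]a, b]) (cst (normal_pdf 0 1 a)%:E x))%E).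
    apply: ge0_le_integral => //.
    - by move=> x _; rewrite lee_fin normal_pdf_ge0.
    - apply/measurable_EFinP; apply: measurable_funTS; exact: measurable_normal_pdf.
    - move=> x /=; rewrite in_itv/= => /andP[ax xb].
      by rewrite lee_fin pdf1_dec// ltW.
  rewrite integral_cst// -[X in (_ * X)%E]/(lebesgue_measure (`]a, b]%classic : set R)) lebesgue_measure_itv/= lte_fin.
  case: ltP => [_|ba].
    by rewrite -EFinD -EFinM mulrC.
  by rewrite mule0 lee_fin mulr_ge0 ?normal_pdf_ge0// subr_ge0.
rewrite -[X in _ <= X]/(fine ((b - a) * normal_pdf 0 1 a)%:E).
by apply: fine_le => //; exact: PfinA.
Qed.

Lemma pdf1_even (x : R) : normal_pdf 0 1 (- x) = normal_pdf 0 1 x.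
Proof. by rewrite /normal_pdf oner_eq0 /normal_fun !subr0 sqrrN. Qed.

Lemma Phi1_0 : Phi 1 0 = 1 / 2 :> R.
Proof.
rewrite /Phi /normal_prob.
have c := @continuous_normal_pdf R 0 1 (oner_neq0 _).
have := @ge0_symfun_integralT R (normal_pdf 0 1) (fun x => normal_pdf_ge0 0 1 x) c.
move=> /(_ (fun x => esym (pdf1_even x))).
rewrite integral_normal_pdf -set_itvcy.
rewrite (_ : `]-oo, 0%R] = `]-oo, (- 0)%R] :> set R); last by rewrite oppr0.
rewrite ge0_integration_by_substitutionNy; last 2 first.
- apply/continuous_within_itvNycP; split => [y _|]; first exact: (c y).
  apply: cvg_at_left_filter; exact: c.
- by move=> y _; exact: normal_pdf_ge0.
rewrite (_ : normal_pdf 0 1 \o -%R = normal_pdf 0 1); last first.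
  by apply/funext => x; rewrite /= pdf1_even.
case: (\int[_]_(x in _) _)%E => [r||] //=.
- move=> h; have h1 : (1:R) = 2 * r by apply: EFin_inj; rewrite EFinM.
  by lra.
- by move=> /eqP; rewrite mulry gtr0_sg// mul1e.
- by move=> /eqP; rewrite mulrNy gtr0_sg// mul1e.
Qed.


Lemma ratio_bound (A B D X be : R) : 1/2 <= A -> 1/2 <= B -> `|A - B| <= D ->
  2 * D <= X -> 0 < be -> 1 - be - X <= A / B <= 1 + be + X.
Proof.
move=> hA hB hD hX hb; have B0 : 0 < B by lra.
move/ler_normlP: hD => [h1 h2].
rewrite ler_pdivlMr// ler_pdivrMr//; apply/andP; split; nra.
Qed.

Lemma key_s (be u v : R) : 0 < be -> be < 1 -> 0 < u -> 0 < v ->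
  1 - be <= u ^+ 2 / v ^+ 2 -> (1 - be) * v <= u.
Proof.
move=> b0 b1 u0 v0; rewrite ler_pdivlMr ?exprn_gt0// => h.
rewrite leNgt; apply/negP => h'.
have : u ^+ 2 < ((1 - be) * v) ^+ 2 by rewrite ltr_pXn2r// ?nnegrE; [exact: ltW|nra].
nra.
Qed.

Lemma ab_bound (al be l1 l2 s1 s2 : R) : 0 <= al -> 0 < be -> be < 1 ->
  l2 <= l1 -> 0 <= l2 -> 0 < s1 -> 0 < s2 -> l1 - l2 <= al ->
  1 - be <= s1 ^+ 2 / s2 ^+ 2 -> 1 - be <= s2 ^+ 2 / s1 ^+ 2 ->
  `|l1 / s1 - l2 / s2| <= (al + be * l1) / Num.min s1 s2.
Proof.
move=> a0 b0 b1 l12 l20 s10 s20 hal h12 h21.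
have k12 := @key_s be s1 s2 b0 b1 s10 s20 h12.
have k21 := @key_s be s2 s1 b0 b1 s20 s10 h21.
set x := l1 / s1; set y := l2 / s2.
have ex : l1 = x * s1 by rewrite /x divfK ?gt_eqF.
have ey : l2 = y * s2 by rewrite /y divfK ?gt_eqF.
have x0 : 0 <= x by apply: divr_ge0; [exact: le_trans l20 l12 | exact: ltW].
have y0 : 0 <= y by rewrite /y divr_ge0// ltW.
rewrite ex ey in l12 hal *.
have [s12|s21] := leP s1 s2.
- apply/ler_normlP; split; rewrite ler_pdivlMr//; nra.
- apply/ler_normlP; split; rewrite ler_pdivlMr//; nra.
Qed.

Lemma peak_bound : 2 * normal_peak (1 : R) <= Num.sqrt (8 / pi).
Proof.
have p0 : (0 : R) < pi by exact: pi_gt0.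
have q0 : (0 : R) < Num.sqrt (1 ^+ 2 * pi *+ 2) by rewrite sqrtr_gt0 expr1n mul1r pmulrn_lgt0.
rewrite /normal_peak -(@ler_pXn2r _ 2) ?nnegrE ?sqrtr_ge0 ?mulr_ge0 ?invr_ge0 ?ltW//.
rewrite sqr_sqrtr ?divr_ge0 ?ltW// exprMn exprVn sqr_sqrtr ?ltW//.
rewrite expr1n mul1r.
have gen : forall p : R, 0 < p -> 2 ^+ 2 / (p *+ 2) < 8 / p.
  move=> p pp; have -> : 2 ^+ 2 / (p *+ 2) = 2 / p.
    by rewrite -mulr_natr; field; rewrite gt_eqF.
  by rewrite ltr_pM2r ?invr_gt0//; lra.
  exact: gen.
by rewrite expr1n mul1r pmulrn_lgt0.
Qed.

Lemma exp_part (be l1 l2 s1 s2 : R) : 0 < be -> be < 1 -> l2 <= l1 -> 0 <= l2 ->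
  0 < s1 -> 0 < s2 ->
  - (Num.min (l1 / s1) (l2 / s2) - 0) ^+ 2 / (1 ^+ 2 *+ 2) <=
  - (l2 ^+ 2 * (1 - be)) / (2 * Num.max (s1 ^+ 2) (s2 ^+ 2)).
Proof.
move=> b0 b1 l12 l20 s10 s20.
set m := Num.min _ _.
have [M [M0 eM hm]] : exists M, [/\ 0 < M, Num.max (s1 ^+ 2) (s2 ^+ 2) = M ^+ 2 &
    l2 / M <= m].
  have [s12|s21] := leP s1 s2.
  - exists s2; split => //.
      by apply/max_idPr; rewrite ler_pXn2r// ?nnegrE ltW.
    rewrite /m le_min; apply/andP; split; rewrite ler_pdivlMr// mulrAC ler_pdivrMr//; nra.
  - exists s1; split => //.
      by apply/max_idPl; rewrite ler_pXn2r// ?nnegrE ltW.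
    rewrite /m le_min; apply/andP; split; rewrite ler_pdivlMr// mulrAC ler_pdivrMr//; nra.
rewrite eM subr0.
have t0 : 0 <= l2 / M by rewrite divr_ge0// ltW.
have -> : - (l2 ^+ 2 * (1 - be)) / (2 * M ^+ 2) = - ((l2 / M) ^+ 2 * (1 - be)) / 2.
  by field; rewrite gt_eqF.
rewrite expr1n mulr2n.
set t := l2 / M in t0 hm *.
have : t ^+ 2 <= m ^+ 2 by rewrite ler_pXn2r// ?nnegrE// (le_trans t0).
move=> h; have : 0 <= t ^+ 2 * be by rewrite mulr_ge0 ?sqr_ge0 ?ltW.
move=> h2; rewrite ler_pM2r ?invr_gt0 ?addr_gt0//; nra.
Qed.

Lemma Phi1_mono (a b : R) : a <= b -> Phi 1 a <= Phi 1 b.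
Proof.
move=> ab; rewrite /Phi; apply: fine_le; [exact: PfinA|exact: PfinA|].
apply: le_measure; rewrite ?inE//.
by move=> x /=; rewrite !in_itv /= => xa; exact: le_trans xa ab.
Qed.

Lemma Phi1_half (a : R) : 0 <= a -> 1 / 2 <= Phi 1 a.
Proof. by move=> a0; rewrite -Phi1_0; exact: Phi1_mono. Qed.

Lemma reassoc (u v w z : R) : u * (v * (w * z)) = (u * w) * v * z.
Proof. by ring. Qed.
End S.

Theorem lemmaB3 (R : realType) (alpha beta2 l1 l2 s1 s2 : R)
  (halpha : 0 <= alpha) (hb0 : 0 < beta2) (hb1 : beta2 < 1)
  (hl12 : l2 <= l1) (hl2 : 0 <= l2)
  (hs1 : 0 < s1) (hs2 : 0 < s2)
  (hs1' : 1 <= s1 ^+ 2) (hs2' : 1 <= s2 ^+ 2)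
  (hdl : l1 - l2 <= alpha)
  (hr1 : 1 - beta2 <= s1 ^+ 2 / s2 ^+ 2) (hr1' : s1 ^+ 2 / s2 ^+ 2 <= 1 + beta2)
  (hr2 : 1 - beta2 <= s2 ^+ 2 / s1 ^+ 2) (hr2' : s2 ^+ 2 / s1 ^+ 2 <= 1 + beta2) :
  let X := Num.sqrt (8 / pi) * ((alpha + beta2 * l1) / Num.min s1 s2)
           * expR (- (l2 ^+ 2 * (1 - beta2)) / (2 * Num.max (s1 ^+ 2) (s2 ^+ 2))) in
  (1 - beta2 - X <= Phi s1 l1 / Phi s2 l2 <= 1 + beta2 + X) /\
  (1 - beta2 - X <= Phi s2 l2 / Phi s1 l1 <= 1 + beta2 + X).
Proof.
move=> X.
rewrite (@Phi_scale R s1 l1 hs1) (@Phi_scale R s2 l2 hs2).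
have a0 : 0 <= l1 / s1 by apply: divr_ge0; [exact: le_trans hl2 hl12 | exact: ltW].
have b0 : 0 <= l2 / s2 by apply: divr_ge0; [exact: hl2 | exact: ltW].
have hX : 2 * (`|l1 / s1 - l2 / s2| * normal_pdf 0 1 (Num.min (l1 / s1) (l2 / s2))) <= X.
  rewrite /X /normal_pdf oner_eq0 /normal_fun reassoc.
  apply: ler_pM.
  - by rewrite mulr_ge0 ?normr_ge0// mulr_ge0 ?normal_peak_ge0.
  - exact: expR_ge0.
  - apply: ler_pM.
    + by rewrite mulr_ge0 ?normal_peak_ge0.
    + exact: normr_ge0.
    + exact: peak_bound.
    + exact: ab_bound.
  - by rewrite ler_expR; exact: exp_part.
have hD : `|Phi 1 (l1 / s1) - Phi 1 (l2 / s2)| <=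
    `|l1 / s1 - l2 / s2| * normal_pdf 0 1 (Num.min (l1 / s1) (l2 / s2)).
  case: (leP (l1 / s1) (l2 / s2)) => hab.
  - rewrite distrC ger0_norm ?subr_ge0 ?Phi1_mono// distrC ger0_norm ?subr_ge0//.
    exact: Phi1_diff.
  - have hab' := ltW hab.
    rewrite ger0_norm ?subr_ge0 ?Phi1_mono// ger0_norm ?subr_ge0//.
    exact: Phi1_diff.
have hD' := hD; rewrite distrC in hD'.
by split; [apply: (@ratio_bound R _ _ _ _ _ _ _ hD hX) | apply: (@ratio_bound R _ _ _ _ _ _ _ hD' hX)];
  rewrite // Phi1_half.
Qed.
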